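(* Let $E\subseteq L$ be finite. If $E\models\bot$ then $\vec{\mathcal U}^E$ is empty, while if $E\not\models\bot$ then $\vec{\mathcal U}^E$ is full (so in either case $\vec{\mathcal U}^E\in\Upsilon$). In both cases $\preceq_E=\preceq_{\vec{\mathcal U}^E}$. Hence $\preceq_E$ is an E-relation.
   Context: $L$ is a propositional language built from a finite set of propositional variables with the connectives $\neg,\wedge,\vee,\rightarrow,\top,\bot$; $W$ is the finite set of propositional worlds. For $\theta\in L$, $S_\theta=\{w\in W\mid w\models\theta\}$; for $E\cup\{\phi\}\subseteq L$, $E\models\phi$ means $\bigcap_{\theta\in E}S_\theta\subseteq S_\phi$; $\models\phi$ means $\emptyset\models\phi$; a set $E$ is consistent iff $E\not\models\bot$. For $w\in W$, $\mathrm{sent}_E(w)=\{\theta\in E\mid w\models\theta\}$. Sequences: finite sequences $\vec{\mathcal U}=(\mathcal U_0,\ldots,\mathcal U_k)$ of mutually disjoint subsets of $W$ (components may be empty, possibly repeatedly). $\mathrm{rank}^{\vec{\mathcal U}}(\theta)$ is the least $i$ with $\mathcal U_i\cap S_\theta\neq\emptyset$, $\infty$ if none ($i<\infty$ for all integers $i$). $\theta\mid\!\sim_{\vec{\mathcal U}}\phi$ iff $\mathrm{rank}^{\vec{\mathcal U}}(\theta)<\mathrm{rank}^{\vec{\mathcal U}}(\theta\wedge\neg\phi)$ or $\mathrm{rank}^{\vec{\mathcal U}}(\theta)=\infty$. $\vec{\mathcal U}$ is full iff $\bigcup_i\mathcal U_i=W$, empty iff $\bigcup_i\mathcal U_i=\emptyset$;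 $\Upsilon$ is the set of sequences which are full or empty. For $\vec{\mathcal U}\in\Upsilon$, $\theta\preceq_{\vec{\mathcal U}}\phi$ iff (not $\neg\theta\vee\neg\phi\mid\!\sim_{\vec{\mathcal U}}\theta$) or $\neg\phi\mid\!\sim_{\vec{\mathcal U}}\bot$. E-relation: a relation $\preceq\subseteq L\times L$ such that for all $\theta,\phi,\psi$: (E1) $\theta\preceq\phi$ and $\phi\preceq\psi$ imply $\theta\preceq\psi$; (E2) $\theta\models\phi$ implies $\theta\preceq\phi$; (E3) $\theta\preceq\theta\wedge\phi$ or $\phi\preceq\theta\wedge\phi$; (E4) if $\bot\prec\psi$ for some $\psi$, then $\theta\preceq\phi$ for all $\theta$ implies $\models\phi$; here $\prec$ is the strict part of $\preceq$. Relation generated by a set: for $E\subseteq L$, define $\theta\prec_E\phi$ iff $E\not\models\bot$, $\not\models\theta$, and for every $E'\subseteq E$ such that $E'\cup\{\neg\phi\}$ is consistent there exists $E''\subseteq E$ with $|E'|<|E''|$ and $E''\cup\{\neg\theta\}$ consistent. The relation $\preceq_E$ is the relation with strict part $\prec_E$, i.e. $\theta\preceq_E\phi$ iff not $\phi\prec_E\theta$. For finite $E$ with $|E|=k$, set for $i=0,\ldots,k$: $\mathcal U^E_i=\{w\in W\mid |\mathrm{sent}_E(w)|=k-i\}$ if $E\not\models\bot$, and $\mathcal U^E_i=\emptyset$ otherwise; $\vec{\mathcal U}^E=(\mathcal U^E_0,\ldots,\mathcal U^E_k)$. *)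

(* Defs.v *)
From HB Require Import structures.
From mathcomp Require Import all_boot all_order.
From mathcomp Require Import finmap.
Set Implicit Arguments. Unset Strict Implicit. Unset Printing Implicit Defensive.

Inductive form (V : Type) : Type :=
| Var of V
| Neg of form V
| And of form V & form V
| Or  of form V & form V
| Imp of form V & form V
| Top
| Bot.
Arguments Top {V}. Arguments Bot {V}.

Section FormCount.
Variable V : countType.
Fixpoint form_enc (f : form V) : GenTree.tree V :=
  match f with
  | Var v => GenTree.Leaf v
  | Neg a => GenTree.Node 0 [:: form_enc a]
  | And a b => GenTree.Node 1 [:: form_enc a; form_enc b]
  | Or a b => GenTree.Node 2 [:: form_enc a; form_enc b]
  | Imp a b => GenTree.Node 3 [:: form_enc a; form_enc b]
  | Top => GenTree.Node 4 [::]
  | Bot => GenTree.Node 5 [::]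
  end.
Fixpoint form_dec (t : GenTree.tree V) : option (form V) :=
  match t with
  | GenTree.Leaf v => Some (Var v)
  | GenTree.Node 0 [:: a] => omap (@Neg V) (form_dec a)
  | GenTree.Node 1 [:: a; b] =>
      if (form_dec a, form_dec b) is (Some x, Some y) then Some (And x y) else None
  | GenTree.Node 2 [:: a; b] =>
      if (form_dec a, form_dec b) is (Some x, Some y) then Some (Or x y) else None
  | GenTree.Node 3 [:: a; b] =>
      if (form_dec a, form_dec b) is (Some x, Some y) then Some (Imp x y) else None
  | GenTree.Node 4 [::] => Some Top
  | GenTree.Node 5 [::] => Some Bot
  | _ => None
  end.
Lemma form_encK : pcancel form_enc form_dec.
Proof. by elim=> //= [? -> | ? -> ? -> | ? -> ? -> | ? -> ? ->]. Qed.
HB.instance Definition _ := Countable.copy (form V) (pcan_type form_encK).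
End FormCount.

Section Semantics.
Variable V : finType.

(* worlds: all truth assignments to the variables; W is the whole finite type *)
Definition world := {ffun V -> bool}.

Fixpoint sat (w : world) (f : form V) : bool :=
  match f with
  | Var v => w v
  | Neg a => ~~ sat w a
  | And a b => sat w a && sat w b
  | Or a b => sat w a || sat w b
  | Imp a b => sat w a ==> sat w b
  | Top => true
  | Bot => false
  end.

Definition S (t : form V) : {set world} := [set w | sat w t].

Definition ent (E : {fset form V}) (p : form V) : bool :=
  (\bigcap_(t <- E) S t) \subset S p.

Definition valid (p : form V) : bool := ent fset0%fset p.

Definition consistent (E : {fset form V}) : bool := ~~ ent E Bot.

Definition sent (E : {fset form V}) (w : world) : {fset form V} :=
  [fset t in E | sat w t]%fset.

(* Sequences of subsets of W. Ranks: None stands for infinity. *)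
Definition rank (U : seq {set world}) (t : form V) : option nat :=
  let p := fun A : {set world} => [exists w, (w \in A) && (w \in S t)] in
  if has p U then Some (find p U) else None.

Definition rank_lt (a b : option nat) : bool :=
  match a, b with
  | Some i, Some j => i < j
  | Some _, None => true
  | None, _ => false
  end.

Definition nmsim (U : seq {set world}) (t p : form V) : Prop :=
  rank_lt (rank U t) (rank U (And t (Neg p))) \/ rank U t = None.

Definition is_sequence (U : seq {set world}) : Prop :=
  forall i j, i < size U -> j < size U -> i != j ->
    [disjoint nth set0 U i & nth set0 U j].

Definition is_full (U : seq {set world}) : Prop :=
  \bigcup_(A <- U) A = [set: world].
Definition is_empty (U : seq {set world}) : Prop :=
  \bigcup_(A <- U) A = set0.

Definition Upsilon (U : seq {set world}) : Prop :=
  is_sequence U /\ (is_full U \/ is_empty U).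

Definition preceq_U (U : seq {set world}) (t p : form V) : Prop :=
  ~ nmsim U (Or (Neg t) (Neg p)) t \/ nmsim U (Neg p) Bot.

Definition strict (R : form V -> form V -> Prop) (t p : form V) : Prop :=
  R t p /\ ~ R p t.

Definition E_relation (R : form V -> form V -> Prop) : Prop :=
  [/\ (forall t p q, R t p -> R p q -> R t q),
      (forall t p, ent [fset t]%fset p -> R t p),
      (forall t p, R t (And t p) \/ R p (And t p)) &
      ((exists q, strict R Bot q) -> forall p, (forall t, R t p) -> valid p)].

Definition prec_E (E : {fset form V}) (t p : form V) : Prop :=
  [/\ consistent E, ~~ valid t &
      forall E' : {fset form V}, (E' `<=` E)%fset -> consistent (E' `|` [fset Neg p])%fset ->
        exists2 E'' : {fset form V}, (E'' `<=` E)%fset &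
          (#|` E'| < #|` E''|) && consistent (E'' `|` [fset Neg t])%fset].

Definition preceq_E (E : {fset form V}) (t p : form V) : Prop := ~ prec_E E p t.

Definition UE_comp (E : {fset form V}) (i : nat) : {set world} :=
  if consistent E then [set w | #|` sent E w| == #|` E| - i] else set0.

Definition UE (E : {fset form V}) : seq {set world} :=
  mkseq (UE_comp E) (#|` E|).+1.

End Semantics.

(* Main.v *)
Require Import Defs.
From HB Require Import structures.
From mathcomp Require Import all_boot all_order finmap zify.
From Stdlib Require Import Classical.
Local Open Scope fset_scope.
Set Implicit Arguments. Unset Strict Implicit.

Lemma in_bigcapS (V : finType) (s : seq (form V)) w :
  (w \in \bigcap_(t <- s) S t) = all (sat w) s.
Proof.
elim: s => [|a s IH]; first by rewrite big_nil inE.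
by rewrite big_cons in_setI IH inE.
Qed.

Lemma consE (V : finType) (A : {fset form V}) :
  consistent A = [exists w, all (sat w) A].
Proof.
rewrite /consistent /ent; apply/idP/existsP => [H | [w Hw]].
- by move/subsetPn: H => [w Hw _]; exists w; rewrite -in_bigcapS.
- by apply/subsetPn; exists w; [rewrite in_bigcapS | rewrite inE].
Qed.

Lemma validE (V : finType) (p : form V) : valid p = [forall w, sat w p].
Proof.
rewrite /valid /ent; apply/subsetP/forallP => H w.
- have := H w; rewrite in_bigcapS inE; apply; apply/allP => x; by rewrite in_fset0.
- by rewrite inE.
Qed.

Lemma consU (V : finType) (A : {fset form V}) p :
  consistent (A `|` [fset Neg p]) = [exists w, ~~ sat w p && all (sat w) A].
Proof.
rewrite consE; apply/existsP/existsP => [[w Hw] | [w /andP [Hp HA]]]; exists w.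
- move/allP: Hw => Hw; apply/andP; split.
  + by have := Hw (Neg p); rewrite in_fsetU in_fset1 eqxx orbT; apply.
  + by apply/allP => x Hx; apply: Hw; rewrite in_fsetU Hx.
- apply/allP => x; rewrite in_fsetU in_fset1 => /orP [Hx|/eqP ->] //.
  by move/allP: HA; apply.
Qed.

Definition cnt (V : finType) (E : {fset form V}) (w : world V) := #|` sent E w|.

Lemma cnt_le (V : finType) (E : {fset form V}) w : cnt E w <= #|` E|.
Proof. exact: fsubset_leq_card (fset_sub _ _). Qed.

Definition ex (V : finType) (f : form V) := [exists w, w \in S f].
Definition mx (V : finType) (E : {fset form V}) (f : form V) :=
  \max_(w in S f) cnt E w.

Lemma mx_ge (V : finType) (E : {fset form V}) f w : w \in S f -> cnt E w <= mx E f.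
Proof. move=> H; exact: leq_bigmax_cond. Qed.

Lemma mx_le (V : finType) (E : {fset form V}) f : mx E f <= #|` E|.
Proof. apply/bigmax_leqP => w _; exact: cnt_le. Qed.

Lemma mx_ex (V : finType) (E : {fset form V}) f : ex f ->
  exists2 w, w \in S f & cnt E w = mx E f.
Proof.
move/existsP=> [w0 Hw0].
have H : 0 < #|S f| by apply/card_gt0P; exists w0.
have [w Hw Hm] := eq_bigmax_cond (cnt E) H. by exists w.
Qed.

Lemma mx_nex (V : finType) (E : {fset form V}) f : ~~ ex f -> mx E f = 0.
Proof.
move=> H; apply/eqP; rewrite -leqn0; apply/bigmax_leqP => w Hw.
by case/negP: H; apply/existsP; exists w.
Qed.

Lemma rank_UE (V : finType) (E : {fset form V}) f : consistent E ->
  rank (UE E) f = if ex f then Some (#|` E| - mx E f) else None.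
Proof.
move=> HE; rewrite /rank.
set P := (fun A : {set world V} => _).
have Hnth : forall i, i <= #|` E| -> P (nth set0 (UE E) i) =
     [exists w, (cnt E w == #|` E| - i) && (w \in S f)].
  move=> i Hi; rewrite /P /UE nth_mkseq // /UE_comp HE.
  by apply: eq_existsb => w; rewrite inE.
have Hhas : has P (UE E) = ex f.
  apply/hasP/existsP => [[A _ /existsP [w /andP [_ Hw]]] | [w Hw]].
  + by exists w.
  + exists (nth set0 (UE E) (#|` E| - cnt E w)).
    * apply: mem_nth; rewrite size_mkseq; lia.
    * rewrite Hnth; last lia.
      apply/existsP; exists w; rewrite Hw andbT; have := cnt_le E w; move=> ?; apply/eqP; lia.
rewrite Hhas; case Hex: (ex f) => //; congr Some.
have Hsz : find P (UE E) < (#|` E|).+1.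
  by rewrite -(size_mkseq (UE_comp E) (#|` E|).+1) -has_find Hhas.
have Hf := nth_find set0 (introT idP (etrans Hhas Hex) : has P (UE E)).
rewrite Hnth in Hf; last lia.
move/existsP: Hf => [w /andP [/eqP Hw Hs]].
have := mx_ge E Hs; have := mx_le E f.
have [w' Hw' Hc] := mx_ex E Hex.
case: (ltngtP (find P (UE E)) (#|` E| - mx E f)) => // Hlt.
- lia.
- have := before_find set0 Hlt; rewrite Hnth; last lia.
  move/negbT/existsPn => /(_ w'); rewrite Hw' andbT Hc; have := mx_le E f.
  move=> ? /eqP; lia.
Qed.

Lemma rank_UE_inc (V : finType) (E : {fset form V}) f : ~~ consistent E ->
  rank (UE E) f = None.
Proof.
move=> HE; rewrite /rank; case: ifP => // /hasP [A /mapP [i _ ->]].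
by rewrite /UE_comp (negbTE HE) => /existsP [w]; rewrite inE.
Qed.

Lemma in_sent (V : finType) (E : {fset form V}) w x :
  (x \in sent E w) = (x \in E) && sat w x.
Proof. by rewrite /sent !inE. Qed.

Lemma exN (V : finType) (t : form V) : ex (Neg t) = ~~ valid t.
Proof.
rewrite validE /ex; apply/existsP/forallPn => [][w Hw]; exists w; by move: Hw; rewrite inE.
Qed.

Definition pre_b (V : finType) (E : {fset form V}) (t p : form V) : bool :=
  ~~ (consistent E && ex (Neg p) &&
      (~~ ex (Neg t) || (mx E (Neg t) < mx E (Neg p)))).

Lemma precE (V : finType) (E : {fset form V}) t p :
  prec_E E t p <-> (consistent E && ex (Neg t) &&
      (~~ ex (Neg p) || (mx E (Neg p) < mx E (Neg t)))).
Proof.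
split.
- move=> [Hc Hv H]; rewrite Hc exN Hv /=.
  case Hp: (ex (Neg p)) => //=.
  have [w Hw Hcw] := mx_ex E Hp.
  have [||E'' HE'' /andP [Hlt Hcons]] := H (sent E w).
  + exact: fset_sub.
  + rewrite consU; apply/existsP; exists w; move: Hw; rewrite inE /= => ->.
    by apply/allP => x; rewrite in_sent => /andP [].
  move: Hcons; rewrite consU => /existsP [w'' /andP [Ht Hall]].
  have Hsub : E'' `<=` sent E w''.
    apply/fsubsetP => x Hx; rewrite in_sent (fsubsetP HE'' _ Hx).
    by move/allP: Hall; apply.
  have := fsubset_leq_card Hsub.
  have : cnt E w'' <= mx E (Neg t) by apply: mx_ge; rewrite inE.
  rewrite /cnt in Hcw * => ??; lia.
- move=> /andP [/andP [Hc Ht] Hor]; split => //; first by rewrite -exN.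
  move=> E' HE' /[dup] Hcons; rewrite consU => /existsP [w /andP [Hwp Hall]].
  have Hp : ex (Neg p) by apply/existsP; exists w; rewrite inE.
  rewrite Hp /= in Hor.
  have [w' Hw' Hcw'] := mx_ex E Ht.
  exists (sent E w'); first exact: fset_sub.
  apply/andP; split.
  + have Hsub : E' `<=` sent E w.
      apply/fsubsetP => x Hx; rewrite in_sent (fsubsetP HE' _ Hx).
      by move/allP: Hall; apply.
    have := fsubset_leq_card Hsub.
    have : cnt E w <= mx E (Neg p) by apply: mx_ge; rewrite inE.
    rewrite /cnt in Hcw' * => ??; lia.
  + rewrite consU; apply/existsP; exists w'; move: Hw'; rewrite inE /= => -> /=.
    by apply/allP => x; rewrite in_sent => /andP [].
Qed.

Lemma preceqE (V : finType) (E : {fset form V}) t p :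
  preceq_E E t p <-> pre_b E t p.
Proof.
rewrite /preceq_E precE /pre_b; split => [H|H H']; first by apply/negP.
by rewrite H' in H.
Qed.

Lemma ex_S (V : finType) (f g : form V) : S f = S g -> ex f = ex g.
Proof. by rewrite /ex => ->. Qed.
Lemma mx_S (V : finType) (E : {fset form V}) (f g : form V) : S f = S g -> mx E f = mx E g.
Proof. by rewrite /mx => ->. Qed.

Lemma ex_Or (V : finType) (f g : form V) : ex (Or f g) = ex f || ex g.
Proof.
rewrite /ex; apply/existsP/orP => [[w]|[]/existsP[w Hw]].
- by rewrite inE /= => /orP [H|H]; [left|right]; apply/existsP; exists w; rewrite inE.
- by exists w; move: Hw; rewrite !inE /= => ->.
- by exists w; move: Hw; rewrite !inE /= => ->; rewrite orbT.
Qed.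

Lemma mx_Or (V : finType) (E : {fset form V}) (f g : form V) :
  mx E (Or f g) = maxn (mx E f) (mx E g).
Proof.
apply/eqP; rewrite eqn_leq; apply/andP; split.
- apply/bigmax_leqP => w; rewrite inE /= => /orP [H|H]; rewrite leq_max.
  + by apply/orP; left; apply: mx_ge; rewrite inE.
  + by apply/orP; right; apply: mx_ge; rewrite inE.
- rewrite geq_max; apply/andP; split; apply/bigmax_leqP => w Hw; apply: mx_ge;
  move: Hw; rewrite !inE /= => ->; by rewrite ?orbT.
Qed.

Lemma nmsimE (V : finType) (U : seq {set world V}) a b :
  nmsim U a b <-> (rank_lt (rank U a) (rank U (And a (Neg b))) || (rank U a == None)).
Proof.
rewrite /nmsim; split => [[H|H]|/orP [H|/eqP H]]; [by rewrite H | by rewrite H eqxx orbT | by left | by right].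
Qed.

Lemma preceqU (V : finType) (E : {fset form V}) t p :
  preceq_U (UE E) t p <-> pre_b E t p.
Proof.
rewrite /preceq_U !nmsimE /pre_b.
case HE: (consistent E); last first.
  by rewrite !rank_UE_inc ?HE //= eqxx; split => // _; right.
have HS : S (And (Or (Neg t) (Neg p)) (Neg t)) = S (Neg t).
  by apply/setP => w; rewrite !inE /=; case: (sat w t); rewrite ?andbF ?andbT.
rewrite !rank_UE // (ex_S HS) (mx_S E HS).
rewrite (ex_S (f := And (Neg p) (Neg Bot)) (g := Neg p)); last by apply/setP => w; rewrite !inE /= andbT.
rewrite (mx_S E (f := And (Neg p) (Neg Bot)) (g := Neg p)); last by apply/setP => w; rewrite !inE /= andbT.
rewrite ex_Or mx_Or.
have := mx_le E (Neg t); have := mx_le E (Neg p).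
have := @mx_nex _ E (Neg t); have := @mx_nex _ E (Neg p).
case: (ex (Neg t)); case: (ex (Neg p)) => /= Hp Ht ??.
have SN : forall x : nat, (Some x == None) = false by [].
all: rewrite ?eqxx ?SN ?orbF /=.
all: try (have {}Hp := Hp isT); try (have {}Ht := Ht isT).
all: lia.
Qed.

Lemma in_bigcupS (T : finType) (s : seq {set T}) w :
  (w \in (\bigcup_(A <- s) A)%SET) = has (fun A : {set T} => w \in A) s.
Proof.
elim: s => [|a s IH]; first by rewrite big_nil inE.
by rewrite big_cons in_setU IH.
Qed.

Lemma ent_valid1 (V : finType) (t p : form V) w :
  ent [fset t] p -> sat w t -> sat w p.
Proof.
move=> /subsetP H Ht; have := H w; rewrite in_bigcapS inE; apply.
by apply/allP => x; rewrite in_fset1 => /eqP ->.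
Qed.

Lemma mx_mono (V : finType) (E : {fset form V}) f g :
  (forall w, w \in S f -> w \in S g) -> mx E f <= mx E g.
Proof. move=> H; apply/bigmax_leqP => w Hw; apply: mx_ge; exact: H. Qed.

Lemma ex_mono (V : finType) (f g : form V) :
  (forall w, w \in S f -> w \in S g) -> ex f -> ex g.
Proof. by move=> H /existsP [w Hw]; apply/existsP; exists w; apply: H. Qed.

Lemma E_rel (V : finType) (E : {fset form V}) : E_relation (preceq_E E).
Proof.
split.
- move=> t p q; rewrite !preceqE /pre_b.
  have := @mx_nex _ E (Neg t); have := @mx_nex _ E (Neg p); have := @mx_nex _ E (Neg q).
  case: (consistent E) => //=.
  case: (ex (Neg t)); case: (ex (Neg p)); case: (ex (Neg q)) => /= Hq Hp Ht;
  try (have {}Hp := Hp isT); try (have {}Ht := Ht isT); try (have {}Hq := Hq isT); lia.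
- move=> t p H; rewrite preceqE /pre_b.
  have Hs : forall w, w \in S (Neg p) -> w \in S (Neg t).
    move=> w; rewrite !inE /=; apply: contra; exact: ent_valid1.
  have := mx_mono E Hs; have := @ex_mono _ _ _ Hs.
  case: (ex (Neg p)); case: (ex (Neg t)) => /= H1 H2; rewrite ?andbF ?andbT //.
  + lia.
  + by have := H1 isT.
- move=> t p; rewrite !preceqE /pre_b.
  have HS : S (Neg (And t p)) = S (Or (Neg t) (Neg p)).
    by apply/setP => w; rewrite !inE /= negb_and.
  rewrite (ex_S HS) (mx_S E HS) ex_Or mx_Or.
  have := @mx_nex _ E (Neg t); have := @mx_nex _ E (Neg p).
  case: (consistent E) => /=; last by left.
  case: (ex (Neg t)); case: (ex (Neg p)) => /= Hp Ht;
  try (have {}Hp := Hp isT); try (have {}Ht := Ht isT); lia.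
- move=> [q [_ Hq]] p Hall.
  case HC: (consistent E); last first.
    by exfalso; apply: Hq; rewrite preceqE /pre_b HC.
  have := Hall Top; rewrite preceqE /pre_b.
  have HT : ex (Neg (@Top V)) = false by rewrite exN validE; apply/negbF/forallP => w.
  rewrite HC HT /= andbT exN negbK; done.
Qed.

Lemma UE_empty (V : finType) (E : {fset form V}) : ~~ consistent E -> is_empty (UE E).
Proof.
move=> HE; rewrite /is_empty; apply/setP => w; rewrite in_bigcupS inE.
apply/hasP => [][A /mapP [i _ ->]]; by rewrite /UE_comp (negbTE HE) inE.
Qed.

Lemma UE_full (V : finType) (E : {fset form V}) : consistent E -> is_full (UE E).
Proof.
move=> HE; rewrite /is_full; apply/setP => w; rewrite in_bigcupS inE.
apply/hasP; exists (UE_comp E (#|` E| - cnt E w)).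
- rewrite /UE /mkseq; apply: map_f; rewrite mem_iota; lia.
- rewrite /UE_comp HE inE; have := cnt_le E w; rewrite /cnt => ?; apply/eqP; lia.
Qed.

Lemma UE_seq (V : finType) (E : {fset form V}) : is_sequence (UE E).
Proof.
move=> i j; rewrite size_mkseq => Hi Hj Hij; rewrite !nth_mkseq // /UE_comp.
case: (consistent E); last by rewrite -setI_eq0 set0I.
rewrite -setI_eq0; apply/eqP/setP => w; rewrite !inE.
apply/negP => /andP [/eqP -> /eqP]; move: Hij => /eqP; lia.
Qed.

Theorem proposition8 (V : finType) (E : {fset form V}) :
  (ent E Bot -> is_empty (UE E)) /\
  (~~ ent E Bot -> is_full (UE E)) /\
  Upsilon (UE E) /\
  (forall t p : form V, preceq_E E t p <-> preceq_U (UE E) t p) /\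
  E_relation (preceq_E E).
Proof.
split; first by move=> H; apply: UE_empty; rewrite /consistent H.
split; first exact: UE_full.
split.
  split; first exact: UE_seq.
  case HE: (consistent E); [left; exact: UE_full | right; apply: UE_empty; by rewrite HE].
split; last exact: E_rel.
move=> t p; rewrite preceqE preceqU; done.
Qed.
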